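(* For every bisection $\mathcal{S}=(S,\overline{S})$ and every stubborn vertex $x\in S$, it holds that $-a_x\le\mathrm{def}_{\mathcal{S}}(x)\le a_x$.
   Context: $G$ is a finite simple undirected graph with an odd number $n$ of vertices; $d(x)$ is the degree of $x$. Each vertex $x$ has stubbornness $\alpha_x\in(0,1)$ and $a_x=\lfloor\alpha_x/(1-\alpha_x)\rfloor$. A vertex $x$ is stubborn if $a_x\ge\min\{d(x),n-d(x)-1\}$. $W(A,B)$ is the number of edges with one endpoint in $A$ and the other in $B$. A bisection $(S,\overline{S})$ partitions the vertices with $|S|=\frac{n+1}{2}$, $|\overline{S}|=\frac{n-1}{2}$. For $x\in S$, $\mathrm{def}_{\mathcal{S}}(x)=W(x,S)-W(x,\overline{S})$. *)

(* Defs.v *)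
From mathcomp Require Import all_boot all_order all_algebra.
Set Implicit Arguments. Unset Strict Implicit. Unset Printing Implicit Defensive.
Import Order.TTheory GRing.Theory Num.Theory.

Definition simple_graph (T : finType) (e : rel T) : Prop :=
  symmetric e /\ irreflexive e.

Definition deg (T : finType) (e : rel T) (x : T) : nat := #|[set y | e x y]|.

Definition W (T : finType) (e : rel T) (x : T) (A : {set T}) : nat :=
  #|[set y in A | e x y]|.

Definition a_of (R : archiRealFieldType) (alpha : R) : int :=
  Num.floor (alpha / (1 - alpha)).

Definition stubborn (R : archiRealFieldType) (T : finType) (e : rel T)
  (alpha : T -> R) (x : T) : Prop :=
  (Num.min (deg e x)%:Z (#|T|%:Z - (deg e x)%:Z - 1) <= a_of (alpha x))%R.

Definition bisection (T : finType) (S : {set T}) : Prop :=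
  #|S| = (#|T|.+1)./2.

Definition deficiency (T : finType) (e : rel T) (S : {set T}) (x : T) : int :=
  ((W e x S)%:Z - (W e x (~: S))%:Z)%R.

(* Main.v *)
Require Import Defs.
From mathcomp Require Import all_boot all_order all_algebra.
From mathcomp Require Import zify.
Import Order.TTheory GRing.Theory Num.Theory.
Local Open Scope ring_scope.

Theorem lemma5 (R : archiRealFieldType) (T : finType) (e : rel T)
  (alpha : T -> R) :
  simple_graph e -> odd #|T| ->
  (forall v, 0 < alpha v < 1) ->
  forall (S : {set T}) (x : T),
    bisection S -> x \in S -> stubborn e alpha x ->
    - a_of (alpha x) <= deficiency e S x <= a_of (alpha x).
Proof.
move=> [_ irr] odn _ S x bis xS.
rewrite /stubborn /deficiency.
set a := a_of (alpha x).
set A := [set y | e x y].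
have hd : (deg e x = W e x S + W e x (~: S))%N.
  rewrite /deg /W -(cardsID S A); congr (_ + _)%N; apply: eq_card => y;
  by rewrite !inE andbC.
have hs : (W e x S <= #|S| - 1)%N.
  rewrite (cardsD1 x S) xS add1n subn1 /=; apply: subset_leq_card.
  apply/subsetP => y; rewrite !inE => /andP [yS exy]; rewrite yS andbT.
  by apply/eqP => yx; move: exy; rewrite yx irr.
have hc : (W e x (~: S) <= #|T| - #|S|)%N.
  have := cardsCs (~: S); rewrite setCK => <-; apply: subset_leq_card.
  by apply/subsetP => y; rewrite !inE => /andP [].
have hn := odd_double_half #|T|; rewrite odn in hn.
move: bis; rewrite /bisection => bis.
have hS : (#|S| = (#|T|./2).+1)%N.
  by rewrite bis -{1}hn /= add0n doubleK.
move=> hmin; rewrite hd in hmin.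
have hT : #|T| = (2 * #|T|./2 + 1)%N by rewrite -{1}hn -mul2n addnC.
move: hmin hs hc; rewrite hS; move: hT.
set m := (#|T|./2)%N; set n := #|T|; clearbody m n.
move: (W e x S) (W e x (~: S)) => s c hT.
rewrite /Num.min; case: ifP => _ h; lia.
Qed.
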